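(* Let $G$ act by isometries on a $\delta$-hyperbolic geodesic space $X$, let $\alpha\ge3\delta$ and let $U\subset G$ be $\alpha$-reduced at $p\in X$. Let $n\ge2$, let $w\equiv u_1\cdots u_n$ be a reduced word over $U\sqcup U^{-1}$, and set $x_0=p$, $x_i=u_1\cdots u_ip$ for $1\le i\le n$. Then: (i) $(x_{i-1},x_{i+1})_{x_i}+(x_i,x_{i+2})_{x_{i+1}}<|x_i-x_{i+1}|-2(\alpha+50\delta)$ for every $i\in\{1,\dots,n-2\}$; (ii) $|wp-p|\ge\frac12|u_1p-p|+\frac12|u_np-p|+2(n-1)(\alpha+40\delta)+4(n-1)\delta$; (iii) $(p,wp)_{x_i}\le(u_i^{-1}p,u_{i+1}p)_p+2\delta$ for every $i\in\{1,\dots,n-2\}$.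
   Context: Hyperbolicity: $(x,z)_t\ge\min\{(x,y)_t,(y,z)_t\}-\delta$ with Gromov product $(x,y)_z=\frac12(|x-z|+|y-z|-|x-y|)$. For $\alpha\ge3\delta$, a finite subset $U\subset G$ is $\alpha$-reduced at $p\in X$ if $U\cap U^{-1}=\varnothing$ and for every pair of distinct $u_1,u_2\in U\sqcup U^{-1}$, $(u_1p,u_2p)_p<\frac12\min\{|u_1p-p|,|u_2p-p|\}-\alpha-50\delta$. Words over $U\sqcup U^{-1}$ are evaluated in $G$. *)

(* Defs.v *)
From Stdlib Require Import Reals List.
Import ListNotations.
Open Scope R_scope.

Record Group := {
  gcar :> Type;
  gmul : gcar -> gcar -> gcar;
  gone : gcar;
  ginv : gcar -> gcar;
  gmul_assoc : forall a b c, gmul a (gmul b c) = gmul (gmul a b) c;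
  gmul_1l : forall a, gmul gone a = a;
  gmul_1r : forall a, gmul a gone = a;
  gmul_Vl : forall a, gmul (ginv a) a = gone;
  gmul_Vr : forall a, gmul a (ginv a) = gone
}.

Record MetricSpace := {
  mcar :> Type;
  mdist : mcar -> mcar -> R;
  dist_refl : forall x, mdist x x = 0;
  dist_sep : forall x y, mdist x y = 0 -> x = y;
  dist_sym : forall x y, mdist x y = mdist y x;
  dist_tri : forall x y z, mdist x z <= mdist x y + mdist y z
}.

Section Geom.
Variable X : MetricSpace.

Definition gromov (x y z : X) : R :=
  (mdist X x z + mdist X y z - mdist X x y) / 2.

Definition geodesic_space : Prop :=
  forall x y : X, exists g : R -> X,
    g 0 = x /\ g (mdist X x y) = y /\
    forall s t, 0 <= s <= mdist X x y -> 0 <= t <= mdist X x y ->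
      mdist X (g s) (g t) = Rabs (s - t).

Definition hyperbolic (delta : R) : Prop :=
  forall x y z t : X,
    gromov x z t >= Rmin (gromov x y t) (gromov y z t) - delta.
End Geom.

Section Act.
Variables (G : Group) (X : MetricSpace).

Definition isometric_action (act : G -> X -> X) : Prop :=
  (forall x, act (gone G) x = x) /\
  (forall g h x, act (gmul G g h) x = act g (act h x)) /\
  (forall g x y, mdist X (act g x) (act g y) = mdist X x y).

(** Letters of the alphabet U ⊔ U^{-1} (U a finite subset given by a list). *)
Definition letter (U : list G) (a : G) : Prop := In a U \/ In (ginv G a) U.

Definition alpha_reduced (act : G -> X -> X) (delta alpha : R)
    (U : list G) (p : X) : Prop :=
  (forall u, In u U -> ~ In (ginv G u) U) /\
  (forall u1 u2, letter U u1 -> letter U u2 -> u1 <> u2 ->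
     gromov X (act u1 p) (act u2 p) p <
       Rmin (mdist X (act u1 p) p) (mdist X (act u2 p) p) / 2
       - alpha - 50 * delta).

Definition word_eval (w : list G) : G := fold_right (gmul G) (gone G) w.

Definition reduced_word (U : list G) (w : list G) : Prop :=
  Forall (letter U) w /\
  (forall i, (S i < length w)%nat ->
     nth (S i) w (gone G) <> ginv G (nth i w (gone G))).

Definition orbit_pt (act : G -> X -> X) (w : list G) (p : X) (i : nat) : X :=
  act (word_eval (firstn i w)) p.

(** u_i, 1-indexed. *)
Definition letter_at (w : list G) (i : nat) : G := nth (i - 1) w (gone G).
End Act.

(* Main.v *)
Require Import Defs.
From Stdlib Require Import Reals List Lra Lia.
Import ListNotations.
Open Scope R_scope.

Section Gen.
Variable X : MetricSpace.
Variable delta K : R.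
Hypothesis Hd0 : 0 <= delta.
Hypothesis HK : 2 * delta <= K.
Hypothesis Hhyp : hyperbolic X delta.

Definition gp (y : nat -> X) i := gromov X (y i) (y (i+2)%nat) (y (i+1)%nat).
Definition dd (y : nat -> X) i := mdist X (y i) (y (i+1)%nat).

Lemma gromov_sym a b c : gromov X a b c = gromov X b a c.
Proof. unfold gromov. rewrite (Defs.dist_sym X a b). lra. Qed.

Lemma gromov_swap a b c : gromov X a b c + gromov X a c b = mdist X b c.
Proof. unfold gromov. rewrite (Defs.dist_sym X c b). lra. Qed.

Lemma hyp_case x y z t :
  gromov X x y t > gromov X x z t + delta -> gromov X y z t <= gromov X x z t + delta.
Proof.
  intros H. pose proof (Hhyp x y z t) as H1. unfold Rmin in H1.
  destruct (Rle_dec (gromov X x y t) (gromov X y z t)); lra.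
Qed.

Variable y : nat -> X.
Variable m : nat.
Hypothesis Hg1 : forall i, (i + 2 <= m)%nat -> gp y i < dd y i / 2 - K.
Hypothesis Hg2 : forall i, (i + 2 <= m)%nat -> gp y i < dd y (i+1) / 2 - K.

Lemma lemB : forall j, (j + 2 <= m)%nat ->
  gromov X (y 0%nat) (y (j+2)%nat) (y (j+1)%nat) <= gp y j + delta.
Proof.
  induction j as [|j IH]; intros Hj.
  - unfold gp. simpl. lra.
  - specialize (IH ltac:(lia)).
    pose proof (Hg1 (S j) Hj) as H1. pose proof (Hg2 j ltac:(lia)) as H2.
    unfold gp, dd in *.
    replace (S j + 1)%nat with (j+2)%nat in * by lia.
    replace (S j + 2)%nat with (j+3)%nat in * by lia.
    replace (S j) with (j+1)%nat in * by lia.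
    replace (j+1+1)%nat with (j+2)%nat in * by lia.
    replace (j+1+2)%nat with (j+3)%nat in * by lia.
    pose proof (gromov_swap (y 0%nat) (y (j+1)%nat) (y (j+2)%nat)) as E.
    rewrite (gromov_sym (y 0%nat) (y (j+1)%nat)) in E.
    assert (Hc := hyp_case (y (j+1)%nat) (y 0%nat) (y (j+3)%nat) (y (j+2)%nat)).
    apply Hc. lra.
Qed.

Lemma lemD : forall j, (j + 1 <= m)%nat ->
  mdist X (y 0%nat) (y (j+1)%nat) >= dd y 0 / 2 + dd y j / 2 + 2 * INR j * (K - delta).
Proof.
  induction j as [|j IH]; intros Hj.
  - unfold dd. simpl. lra.
  - specialize (IH ltac:(lia)).
    pose proof (lemB j ltac:(lia)) as HB.
    pose proof (Hg1 j ltac:(lia)) as H1. pose proof (Hg2 j ltac:(lia)) as H2.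
    rewrite S_INR.
    unfold gp, dd in *. unfold gromov at 1 in HB.
    replace (j+1+1)%nat with (j+2)%nat in H2 by lia.
    replace (S j + 1)%nat with (j+2)%nat by lia.
    replace (S j) with (j+1)%nat by lia.
    replace (j+1+1)%nat with (j+2)%nat by lia.
    rewrite (Defs.dist_sym X (y (j+2)%nat) (y (j+1)%nat)) in HB.
    lra.
Qed.

End Gen.

Lemma lemBrev (X : MetricSpace) delta K (Hd0 : 0 <= delta) (HK : 2 * delta <= K)
  (Hhyp : hyperbolic X delta) (y : nat -> X) m
  (Hg1 : forall i, (i + 2 <= m)%nat -> gp X y i < dd X y i / 2 - K)
  (Hg2 : forall i, (i + 2 <= m)%nat -> gp X y i < dd X y (i+1) / 2 - K) :
  forall i, (i + 2 <= m)%nat ->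
  gromov X (y m) (y i) (y (i+1)%nat) <= gp X y i + delta.
Proof.
  intros i Hi.
  set (y' := fun t => y (m - t)%nat).
  assert (H1' : forall j, (j + 2 <= m)%nat -> gp X y' j < dd X y' j / 2 - K).
  { intros j Hj. set (k := (m - j - 2)%nat).
    specialize (Hg2 k ltac:(lia)). unfold gp, dd, y' in *.
    replace (m - j)%nat with (k+2)%nat by lia.
    replace (m - (j+1))%nat with (k+1)%nat by lia.
    replace (m - (j+2))%nat with k by lia.
    replace (k+1+1)%nat with (k+2)%nat in Hg2 by lia.
    rewrite gromov_sym, Defs.dist_sym. lra. }
  assert (H2' : forall j, (j + 2 <= m)%nat -> gp X y' j < dd X y' (j+1) / 2 - K).
  { intros j Hj. set (k := (m - j - 2)%nat).
    specialize (Hg1 k ltac:(lia)). unfold gp, dd, y' in *.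
    replace (m - j)%nat with (k+2)%nat by lia.
    replace (m - (j+1))%nat with (k+1)%nat by lia.
    replace (m - (j+1+1))%nat with k by lia.
    replace (m - (j+2))%nat with k by lia.
    rewrite gromov_sym, Defs.dist_sym. lra. }
  pose proof (lemB X delta K Hd0 HK Hhyp y' m H1' H2' (m - i - 2)%nat ltac:(lia)) as H.
  unfold gp, y' in *.
  replace (m - 0)%nat with m in H by lia.
  replace (m - (m - i - 2 + 2))%nat with i in H by lia.
  replace (m - (m - i - 2 + 1))%nat with (i+1)%nat in H by lia.
  replace (m - (m - i - 2))%nat with (i+2)%nat in H by lia.
  rewrite (gromov_sym X (y (i+2)%nat)) in H. exact H.
Qed.

Lemma lemC (X : MetricSpace) delta K (Hd0 : 0 <= delta) (HK : 2 * delta <= K)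
  (Hhyp : hyperbolic X delta) (y : nat -> X) m
  (Hg1 : forall i, (i + 2 <= m)%nat -> gp X y i < dd X y i / 2 - K)
  (Hg2 : forall i, (i + 2 <= m)%nat -> gp X y i < dd X y (i+1) / 2 - K) :
  forall i, (1 <= i)%nat -> (i + 2 <= m)%nat ->
  gromov X (y 0%nat) (y m) (y i) <= gp X y (i-1) + 2 * delta.
Proof.
  intros i Hi1 Hi2.
  pose proof (lemB X delta K Hd0 HK Hhyp y m Hg1 Hg2 (i-1) ltac:(lia)) as HB.
  pose proof (lemBrev X delta K Hd0 HK Hhyp y m Hg1 Hg2 i Hi2) as HR.
  pose proof (Hg2 (i-1)%nat ltac:(lia)) as H2. pose proof (Hg1 i Hi2) as H1.
  replace (i - 1 + 2)%nat with (i+1)%nat in HB by lia.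
  replace (i - 1 + 1)%nat with i in HB, H2 by lia.
  pose proof (gromov_swap X (y m) (y (i+1)%nat) (y i)) as E.
  unfold dd, gp in *.
  rewrite (Defs.dist_sym X (y (i+1)%nat) (y i)) in E.
  pose proof (Hhyp (y 0%nat) (y m) (y (i+1)%nat) (y i)) as H4. unfold Rmin in H4.
  destruct (Rle_dec (gromov X (y 0%nat) (y m) (y i)) (gromov X (y m) (y (i + 1)%nat) (y i))); lra.
Qed.

Lemma ginv_inv (G : Group) (a : G) : ginv G (ginv G a) = a.
Proof.
  rewrite <- (gmul_1r G (ginv G (ginv G a))).
  rewrite <- (gmul_Vl G a), gmul_assoc, gmul_Vl, gmul_1l. reflexivity.
Qed.

Lemma word_eval_app (G : Group) (l1 l2 : list G) :
  word_eval G (l1 ++ l2) = gmul G (word_eval G l1) (word_eval G l2).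
Proof.
  induction l1 as [|a l1 IH]; simpl.
  - rewrite gmul_1l. reflexivity.
  - rewrite IH, gmul_assoc. reflexivity.
Qed.

Lemma firstn_S_nth {A} (w : list A) (d : A) : forall i, (i < length w)%nat ->
  firstn (S i) w = firstn i w ++ [nth i w d].
Proof.
  induction w as [|a w IH]; intros i Hi; simpl in Hi; [lia|].
  destruct i as [|i]; [reflexivity|].
  change (a :: firstn (S i) w = a :: (firstn i w ++ [nth i w d])).
  rewrite (IH i ltac:(lia)). reflexivity.
Qed.

Lemma word_eval_firstn_S (G : Group) (w : list G) i : (i < length w)%nat ->
  word_eval G (firstn (S i) w) = gmul G (word_eval G (firstn i w)) (nth i w (gone G)).
Proof.
  intros Hi. rewrite (firstn_S_nth w (gone G) i Hi), word_eval_app. simpl.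
  rewrite gmul_1r. reflexivity.
Qed.

Theorem mainTheorem9 (G : Group) (X : MetricSpace) (act : G -> X -> X)
  (delta alpha : R) (U : list G) (p : X) (w : list G) :
  isometric_action G X act ->
  geodesic_space X ->
  0 <= delta ->
  hyperbolic X delta ->
  alpha >= 3 * delta ->
  alpha_reduced G X act delta alpha U p ->
  (2 <= length w)%nat ->
  reduced_word G U w ->
  let n := length w in
  let x := orbit_pt G X act w p in
  let u := letter_at G w in
  (* (i) *)
  (forall i, (1 <= i <= n - 2)%nat ->
     gromov X (x (i - 1)%nat) (x (i + 1)%nat) (x i)
     + gromov X (x i) (x (i + 2)%nat) (x (i + 1)%nat)
     < mdist X (x i) (x (i + 1)%nat) - 2 * (alpha + 50 * delta)) /\
  (* (ii) *)
  mdist X (act (word_eval G w) p) p >=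
    / 2 * mdist X (act (u 1%nat) p) p + / 2 * mdist X (act (u n) p) p
    + 2 * INR (n - 1) * (alpha + 40 * delta) + 4 * INR (n - 1) * delta /\
  (* (iii) *)
  (forall i, (1 <= i <= n - 2)%nat ->
     gromov X p (act (word_eval G w) p) (x i) <=
     gromov X (act (ginv G (u i)) p) (act (u (i + 1)%nat) p) p + 2 * delta).
Proof.
  intros [Hact1 [Hactm Hiso]] _ Hd0 Hhyp Halpha [_ Hred] Hn [Hlet Hrw] n x u.
  set (K := alpha + 50 * delta).
  assert (HK : 2 * delta <= K) by (unfold K; lra).
  set (h := fun i => word_eval G (firstn i w)).
  set (a := fun i => nth i w (gone G)).
  assert (Hx : forall i, x i = act (h i) p) by reflexivity.
  assert (HxS : forall i, (i < n)%nat -> x (S i) = act (h i) (act (a i) p)).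
  { intros i Hi. rewrite Hx. unfold h. rewrite word_eval_firstn_S by exact Hi.
    rewrite Hactm. reflexivity. }
  assert (Hx0 : x 0%nat = p) by (rewrite Hx; unfold h; simpl; apply Hact1).
  assert (Hxn : x n = act (word_eval G w) p)
    by (rewrite Hx; unfold h, n; rewrite firstn_all; reflexivity).
  assert (Hgact : forall g a1 b1 c1, gromov X (act g a1) (act g b1) (act g c1) = gromov X a1 b1 c1)
    by (intros; unfold gromov; rewrite !Hiso; reflexivity).
  assert (Hdd : forall i, (i < n)%nat -> dd X x i = mdist X (act (a i) p) p).
  { intros i Hi. unfold dd. rewrite Nat.add_1_r, HxS by exact Hi. rewrite Hx.
    rewrite Defs.dist_sym, <- (Hact1 p) at 1. rewrite Hact1.
    rewrite <- (Hiso (h i) (act (a i) p) p). reflexivity. }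
  assert (HLinv : forall g, mdist X (act (ginv G g) p) p = mdist X (act g p) p).
  { intros g. rewrite <- (Hiso g). rewrite <- Hactm, gmul_Vr, Hact1. apply Defs.dist_sym. }
  assert (Hletter : forall i, (i < n)%nat -> letter G U (a i)).
  { intros i Hi. unfold a. eapply Forall_forall; [exact Hlet|]. apply nth_In. exact Hi. }
  assert (Hgp : forall i, (i + 2 <= n)%nat ->
    gp X x i = gromov X (act (ginv G (a i)) p) (act (a (S i)) p) p).
  { intros i Hi. unfold gp.
    replace (i+2)%nat with (S (S i)) by lia. replace (i+1)%nat with (S i) by lia.
    rewrite (HxS (S i)) by lia. rewrite (HxS i) by lia. rewrite Hx.
    assert (E : h (S i) = gmul G (h i) (a i)).
    { unfold h, a. apply word_eval_firstn_S. lia. }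
    rewrite E.
    rewrite <- (Hgact (gmul G (h i) (a i)) (act (ginv G (a i)) p)).
    rewrite <- !Hactm. rewrite <- !gmul_assoc, gmul_Vr, gmul_1r. reflexivity. }
  assert (Hbound : forall i, (i + 2 <= n)%nat ->
    gp X x i < Rmin (dd X x i) (dd X x (i+1)) / 2 - K).
  { intros i Hi. rewrite Hgp by exact Hi. rewrite !Hdd by lia.
    rewrite Nat.add_1_r, <- (HLinv (a i)). unfold K.
    match goal with |- ?A < ?B / 2 - _ => cut (A < B/2 - alpha - 50*delta); [lra|] end.
    apply Hred.
    - unfold letter. destruct (Hletter i ltac:(lia)) as [H|H]; [right; rewrite ginv_inv; exact H | left; exact H].
    - apply Hletter. lia.
    - intros E. apply (Hrw i ltac:(fold n; lia)). unfold a in E. symmetry. exact E. }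
  assert (Hg1 : forall i, (i + 2 <= n)%nat -> gp X x i < dd X x i / 2 - K).
  { intros i Hi. pose proof (Hbound i Hi). pose proof (Rmin_l (dd X x i) (dd X x (i+1))). lra. }
  assert (Hg2 : forall i, (i + 2 <= n)%nat -> gp X x i < dd X x (i+1) / 2 - K).
  { intros i Hi. pose proof (Hbound i Hi). pose proof (Rmin_r (dd X x i) (dd X x (i+1))). lra. }
  split; [|split].
  - intros i Hi.
    pose proof (Hg1 i ltac:(lia)) as H1. pose proof (Hg2 (i-1)%nat ltac:(lia)) as H2.
    unfold gp, dd in *. replace (i - 1 + 1)%nat with i in H2 by lia.
    replace (i - 1 + 2)%nat with (i+1)%nat in H2 by lia. fold K. lra.
  - pose proof (lemD X delta K Hd0 HK Hhyp x n Hg1 Hg2 (n-1) ltac:(lia)) as H.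
    replace (n - 1 + 1)%nat with n in H by lia. rewrite Hx0, Hxn in H.
    rewrite (Hdd 0%nat) in H by lia. rewrite (Hdd (n-1)%nat) in H by lia.
    unfold u, letter_at. simpl (1 - 1)%nat. fold (a 0%nat). fold (a (n-1)%nat).
    rewrite Defs.dist_sym. fold K in H.
    assert (0 <= INR (n-1)) by apply pos_INR.
    assert (0 <= INR (n-1) * delta) by (apply Rmult_le_pos; lra).
    unfold K in H. lra.
  - intros i Hi.
    pose proof (lemC X delta K Hd0 HK Hhyp x n Hg1 Hg2 i ltac:(lia) ltac:(lia)) as H.
    rewrite Hx0, Hxn in H. rewrite Hgp in H by lia.
    unfold u, letter_at. fold (a (i-1)%nat).
    replace (i + 1 - 1)%nat with (S (i-1)) by lia. fold (a (S (i-1))). exact H.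
Qed.
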